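(* Let $(a',b',c',d')\in\mathbb{Z}_{\ge0}^4$. There exists a unique $(a,b,c,d)\in\mathbb{Z}_{\ge0}^4$ such that $0\le b\le1$, $0\le c\le q_0-1$, $0\le d\le q_0-1$ and $\lVert(a,b,c,d)\rVert=\lVert(a',b',c',d')\rVert$.
   Context: $n\ge2$ is an integer, $q_0=2^n$, $q=2q_0^2$, and for $(a,b,c,d)\in\mathbb{Z}_{\ge0}^4$ one sets $\lVert(a,b,c,d)\rVert:=aq+b(q+q_0)+c(q+2q_0)+d(q+2q_0+1)$. *)

(* Defs.v *)
From mathcomp Require Import all_boot.

Definition q0 (n : nat) : nat := 2 ^ n.
Definition qq (n : nat) : nat := 2 * (q0 n) ^ 2.

Definition wnorm (n a b c d : nat) : nat :=
  a * qq n + b * (qq n + q0 n) + c * (qq n + 2 * q0 n)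
  + d * (qq n + 2 * q0 n + 1).

(* Main.v *)
Require Import Defs.
From mathcomp Require Import all_boot.
From mathcomp Require Import zify.

Lemma divmod_uniq (Q X1 X2 r1 r2 : nat) : r1 < Q -> r2 < Q ->
  Q * X1 + r1 = Q * X2 + r2 -> r1 = r2 /\ X1 = X2.
Proof.
move=> h1 h2 e.
have er : r1 = r2.
  have := congr1 (fun x => x %% Q) e => /=.
  by rewrite mulnC modnMDl mulnC modnMDl !modn_small.
split=> //; subst r2.
have Qp : 0 < Q by lia.
move/addIn: e => /eqP; rewrite eqn_pmul2l //; by move/eqP.
Qed.

Arguments divmod_uniq {Q X1 X2 r1 r2}.

Lemma wnormE n a b c d :
  wnorm n a b c d = q0 n * (2 * q0 n * (a + b + c + d) + b + 2 * c + 2 * d) + d.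
Proof. rewrite /wnorm /qq -mulnn; lia. Qed.

Theorem lemma3p6 (n : nat) (hn : 2 <= n) (a' b' c' d' : nat) :
  exists abcd : nat * nat * nat * nat,
    (let '(a, b, c, d) := abcd in
       [/\ b <= 1, c <= q0 n - 1, d <= q0 n - 1 &
           wnorm n a b c d = wnorm n a' b' c' d'])
    /\ forall a b c d : nat,
         [/\ b <= 1, c <= q0 n - 1, d <= q0 n - 1 &
             wnorm n a b c d = wnorm n a' b' c' d'] ->
         (a, b, c, d) = abcd.
Proof.
have Qp : 0 < q0 n by rewrite /q0 expn_gt0.
set Q := q0 n in Qp *.
pose d := d' %% Q. pose k1 := d' %/ Q.
pose b1 := b' + k1. pose b := b1 %% 2. pose k2 := b1 %/ 2.
pose c1 := c' + k2. pose c := c1 %% Q. pose k3 := c1 %/ Q.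
pose a := a' + Q * k1 + k2 + (Q + 1) * k3.
have hd : d < Q by rewrite ltn_pmod.
have hb : b < 2 by rewrite ltn_pmod.
have hc : c < Q by rewrite ltn_pmod.
have ed : d' = k1 * Q + d by apply: divn_eq.
have eb : b1 = k2 * 2 + b by apply: divn_eq.
have ec : c1 = k3 * Q + c by apply: divn_eq.
have E : wnorm n a b c d = wnorm n a' b' c' d'.
  rewrite !wnormE -/Q /a ed.
  move: eb ec; rewrite /b1 /c1 => eb ec.
  have -> : c' = k3 * Q + c - k2 by lia.
  have -> : b' = k2 * 2 + b - k1 by lia.
  have h1 : k1 <= k2 * 2 + b by lia.
  have h2 : k2 <= k3 * Q + c by lia.
  nia.
exists (a, b, c, d); split.
  split=> //; lia.
move=> x y z w [hy hz hw]; rewrite -E => E2.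
rewrite !wnormE -/Q in E2.
have [ew E3] := divmod_uniq (ltac:(lia) : w < Q) hd E2.
subst w.
have E4 : 2 * (Q * (a + b + c + d) + c) + b = 2 * (Q * (x + y + z + d) + z) + y by lia.
have [ey E5] := divmod_uniq (ltac:(lia) : b < 2) (ltac:(lia) : y < 2) E4.
subst y.
have [ez E6] := divmod_uniq (ltac:(lia) : c < Q) (ltac:(lia) : z < Q) E5.
subst z.
have ex : x = a.
  have : Q * (x + b + c + d) = Q * (a + b + c + d) by lia.
  move/eqP; rewrite eqn_pmul2l // => /eqP; lia.
by rewrite ex.
Qed.
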